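(* Let $G$ be a compactly generated, totally disconnected, locally compact group, let $\Gamma$ be a Cayley–Abels graph for $G$ of degree $d$, let $K$ be the kernel of the action of $G$ on $\Gamma$, and let $L\le S_d$ be the local action of $G$ on $\Gamma$. If $A$ belongs to the local simple content of $G/K$, then $A$ is a subquotient of a point stabilizer of $L$: there exist $i\in\{1,\dots,d\}$ and subgroups $N\trianglelefteq H\le L_i$ with $H/N\cong A$, where $L_i$ is the stabilizer of $i$ in $L$. In particular $A$ is isomorphic to a subquotient of $S_{d-1}$.
   Context: A Cayley–Abels graph for a totally disconnected, locally compact group $G$ is a connected, locally finite simple graph $\Gamma$ with an action of $G$ by automorphisms (not necessarily faithful) that is vertex-transitive with compact open vertex stabilizers. The local action is the permutation group, viewed as a subgroup of $S_d$ up to conjugacy, induced by a vertex stabilizer $G_\alpha$ on the neighbourhood $\Gamma(\alpha)$. A subquotient of a group is a quotient of one of its subgroups. For a second countable profinite group, a composition series is a countable descending chain of closed subgroups, each normal in the previous, with trivial intersection and simple (finite) successive quotients; its composition factors are independent of the series. The local simple content of a second countable, totally disconnected, locally compact group is the set of isomorphism classes of finite simple groups that are composition factors of every compact open subgroup. *)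

(* Defs.v *)
From HB Require Import structures.
From mathcomp Require Import all_boot all_order all_algebra all_fingroup all_solvable.
From mathcomp Require Import all_classical all_reals all_analysis.
From Stdlib Require Import Relations.

Set Implicit Arguments.
Unset Strict Implicit.
Unset Printing Implicit Defensive.

Local Open Scope classical_set_scope.

Record tgroup (G : topologicalType) := TGroup {
  tmul : G -> G -> G;
  tinv : G -> G;
  tone : G;
  tmulA : forall x y z, tmul x (tmul y z) = tmul (tmul x y) z;
  tmul1g : forall x, tmul tone x = x;
  tmulVg : forall x, tmul (tinv x) x = tone;
  tmul_cont : continuous (fun p : G * G => tmul p.1 p.2);
  tinv_cont : continuous tinv }.

Section TGroupDefs.
Variables (G : topologicalType) (TG : tgroup G).

Definition is_subgroup (S : set G) : Prop :=
  S (tone TG) /\ forall x y, S x -> S y -> S (tmul TG x (tinv TG y)).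

Definition normal_in (N S : set G) : Prop :=
  is_subgroup N /\ N `<=` S /\
  forall g n, S g -> N n -> N (tmul TG (tinv TG g) (tmul TG n g)).

Definition gen_subgroup (C : set G) : set G :=
  fun x => forall S, is_subgroup S -> C `<=` S -> S x.

Definition compactly_generated : Prop :=
  exists C : set G, compact C /\ gen_subgroup C = setT.

Definition tdlc : Prop :=
  totally_disconnected (@setT G) /\ locally_compact (@setT G).

(* S / T is isomorphic to the finite group A (T normal in S):
   there is a homomorphism S -> A, onto A, whose kernel is T. *)
Definition quotient_iso (S T : set G) (gT : finGroupType) (A : {group gT}) :
  Prop :=
  exists f : G -> gT,
    (forall x y, S x -> S y -> f (tmul TG x y) = (f x * f y)%g) /\
    (forall a, a \in A <-> exists2 x, S x & f x = a) /\
    (forall x, S x -> (f x = 1%g <-> T x)).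

(* Repetitions s (n+1) = s n are allowed (padding, so that finite chains
   can also be indexed by nat); they contribute no composition factor. *)
Definition comp_series (U : set G) (s : nat -> set G) : Prop :=
  s 0%N = U /\
  (forall n, closed (s n.+1) /\ normal_in (s n.+1) (s n) /\
     (s n.+1 = s n \/
      exists (gT : finGroupType) (B : {group gT}),
        simple B /\ quotient_iso (s n) (s n.+1) B)) /\
  \bigcap_n s n = [set tone TG].

Definition composition_factor (U : set G) (gT : finGroupType)
  (A : {group gT}) : Prop :=
  exists s, comp_series U s /\
    exists n, s n.+1 <> s n /\ quotient_iso (s n) (s n.+1) A.

Definition compact_open_subgroup (U : set G) : Prop :=
  compact U /\ open U /\ is_subgroup U.

Definition local_simple_content (gT : finGroupType) (A : {group gT}) : Prop :=
  simple A /\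
  forall U, compact_open_subgroup U -> composition_factor U A.

End TGroupDefs.

Section Graphs.
Variables (V : Type) (adj : V -> V -> Prop).

Definition simple_graph : Prop :=
  (forall x y, adj x y -> adj y x) /\ (forall x, ~ adj x x).

Definition graph_connected : Prop :=
  forall x y, clos_refl_trans V adj x y.

Definition locally_finite : Prop :=
  forall x, finite_set [set y | adj x y].

Definition nbhd_enum (x : V) (d : nat) (e : 'I_d -> V) : Prop :=
  injective e /\ forall y, adj x y <-> exists i, e i = y.

Definition regular_of_degree (d : nat) : Prop :=
  forall x, exists e : 'I_d -> V, nbhd_enum x e.
End Graphs.

Section Action.
Variables (G : topologicalType) (TG : tgroup G) (V : Type)
  (adj : V -> V -> Prop) (act : G -> V -> V).

Definition is_graph_action : Prop :=
  (forall v, act (tone TG) v = v) /\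
  (forall g h v, act (tmul TG g h) v = act g (act h v)) /\
  (forall g x y, adj x y <-> adj (act g x) (act g y)).

Definition vstab (v : V) : set G := [set g | act g v = v].

Definition cayley_abels : Prop :=
  simple_graph adj /\ graph_connected adj /\ locally_finite adj /\
  is_graph_action /\
  (forall u v, exists g, act g u = v) /\
  (forall v, compact (vstab v) /\ open (vstab v)).

Definition action_kernel : set G := [set g | forall v, act g v = v].

Definition local_action (a : V) (d : nat) (e : 'I_d -> V)
  (L : {group {perm 'I_d}}) : Prop :=
  nbhd_enum adj a e /\
  forall s : {perm 'I_d}, s \in L <->
    exists g, act g a = a /\ forall i, act g (e i) = e (s i).
End Action.

Definition is_quotient_group (G : topologicalType) (TG : tgroup G)
  (K : set G) (Q : topologicalType) (TQ : tgroup Q) (pi : G -> Q) : Prop :=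
  (forall x y, pi (tmul TG x y) = tmul TQ (pi x) (pi y)) /\
  (forall q, exists g, pi g = q) /\
  continuous pi /\
  (forall O : set G, open O -> open (pi @` O)) /\
  (forall g, pi g = tone TQ <-> K g).

(* Main.v *)
Require Import Defs.
From HB Require Import structures.
From mathcomp Require Import all_boot all_order all_algebra all_fingroup all_solvable.
From mathcomp Require Import all_classical all_reals all_analysis.
From Stdlib Require Import ClassicalEpsilon Relations.

Set Implicit Arguments.
Unset Strict Implicit.
Unset Printing Implicit Defensive.

Local Open Scope classical_set_scope.

Lemma compact_decr (T : topologicalType) (C : set T) (F : nat -> set T) :
  compact C -> (forall m, closed (F m)) ->
  (forall m n, (m <= n)%N -> F n `<=` F m) ->
  (forall m, (C `&` F m) !=set0) -> exists p, C p /\ forall m, F m p.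
Proof.
move=> cC clF decF ne.
pose Fil := filter_from setT (fun m => C `&` F m).
have FilF : Filter Fil.
  apply: filter_from_filter; first by exists 0%N.
  move=> i j _ _; exists (maxn i j) => // x [Cx Fx]; split; split=> //.
    by apply: (decF i (maxn i j)) => //; rewrite leq_maxl.
  by apply: (decF j (maxn i j)) => //; rewrite leq_maxr.
have FilP : ProperFilter Fil by apply: filter_from_proper => i _; exact: ne.
have [|p [Cp clp]] := cC Fil FilP; first by exists 0%N => // x [].
exists p; split=> // m; apply: contrapT => nFm.
have nb : nbhs p (~` F m).
  by apply: open_nbhs_nbhs; split=> //; apply: closed_openC.
have [x [[_ Fx] nFx]] := clp _ _ (ex_intro2 _ _ m I (fun x (h : (C `&` F m) x) => h)) nb.
by apply: nFx.
Qed.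


Section TG.
Variables (G : topologicalType) (TG : tgroup G).
Local Notation "x ** y" := (tmul TG x y) (at level 40, left associativity).
Local Notation inv := (tinv TG).
Local Notation one := (tone TG).
Let mul1 := tmul1g TG.
Let mulV := tmulVg TG.
Let mulA := tmulA TG.

Lemma tmulgV x : x ** inv x = one.
Proof.
have e : inv x ** (x ** inv x) = inv x by rewrite mulA mulV mul1.
by rewrite -[LHS]mul1 -(mulV (inv x)) -mulA e mulV.
Qed.

Lemma tmulg1 x : x ** one = x.
Proof. by rewrite -(mulV x) mulA tmulgV mul1. Qed.

Lemma tmulKg x y : inv x ** (x ** y) = y.
Proof. by rewrite mulA mulV mul1. Qed.

Lemma tmulKVg x y : x ** (inv x ** y) = y.
Proof. by rewrite mulA tmulgV mul1. Qed.

Lemma tinv_uniq x y : x ** y = one -> y = inv x.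
Proof. by move=> h; rewrite -(tmulKg x y) h tmulg1. Qed.

Lemma tinvK x : inv (inv x) = x.
Proof. by apply/esym/tinv_uniq; rewrite mulV. Qed.

Lemma tinvM x y : inv (x ** y) = inv y ** inv x.
Proof.
apply/esym/tinv_uniq.
by rewrite -mulA (mulA y) tmulgV mul1 tmulgV.
Qed.

Lemma tinv1 : inv one = one.
Proof. by apply/esym/tinv_uniq; rewrite mul1. Qed.

Lemma sub1 S : is_subgroup TG S -> S one.
Proof. by case. Qed.

Lemma subV S x : is_subgroup TG S -> S x -> S (inv x).
Proof.
move=> [S1 SM] Sx; have := SM _ _ S1 Sx; by rewrite mul1.
Qed.

Lemma subM S x y : is_subgroup TG S -> S x -> S y -> S (x ** y).
Proof.
move=> hS Sx Sy; have := (proj2 hS) _ _ Sx (subV hS Sy); by rewrite tinvK.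
Qed.

Lemma lmul_cont g : continuous (fun y => g ** y).
Proof.
move=> y.
apply: (@continuous2_cvg _ _ _ _ _ _ (fun _ => g) (fun z => z) (tmul TG) g y).
  - exact: (@tmul_cont _ TG (g, y)).
- exact: cvg_cst.
- exact: cvg_id.
Qed.

Lemma open_sub_closed S : is_subgroup TG S -> open S -> closed S.
Proof.
move=> hS oS; rewrite -openC.
have -> : ~` S = \bigcup_(g in ~` S) ((fun y => inv g ** y) @^-1` S).
  rewrite eqEsubset; split=> x.
    by move=> nSx; exists x => //=; rewrite mulV; exact: sub1.
  move=> [g nSg /= Sgx] Sx; apply: nSg.
  have := subM hS Sx (subV hS Sgx); by rewrite tinvM tinvK tmulKVg.
apply: bigcup_open => g _; by move: (@lmul_cont (inv g)) => /continuousP; apply.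
Qed.

Lemma closed_translate S g : closed S -> closed ((fun y => g ** y) @^-1` S).
Proof. by move=> cS; move: (@lmul_cont g) => /continuous_closedP; apply. Qed.

End TG.


Lemma open_bigcap_fin (T : topologicalType) (I : finType) (f : I -> set T) :
  (forall i, open (f i)) -> open (\bigcap_(i in [set: I]) f i).
Proof.
move=> hof.
have H : forall s : seq I, open (\bigcap_(i in [set i | i \in s]) f i).
  elim=> [|y s IH].
    suff -> : \bigcap_(i in [set i | i \in [::]]) f i = [set: T] by exact: openT.
    by rewrite eqEsubset; split=> x // _ i.
  suff -> : \bigcap_(i in [set i | i \in y :: s]) f i =
     f y `&` \bigcap_(i in [set i | i \in s]) f i by apply: openI => //; exact: hof.
  rewrite eqEsubset; split=> x.
    move=> hx; split; first by apply: hx => /=; rewrite inE eqxx.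
    by move=> i /= si; apply: hx => /=; rewrite inE si orbT.
  by move=> [fy hs] i /=; rewrite inE => /orP [/eqP -> //|si]; apply: hs.
have E : \bigcap_(i in [set i | i \in index_enum I]) f i = \bigcap_(i in [set: I]) f i.
  rewrite eqEsubset; split=> x hx i _; apply: hx => //=; by move: (mem_index_enum i).
by rewrite -E; apply: H.
Qed.

Section Act.
Variables (G : topologicalType) (TG : tgroup G) (V : Type)
  (adj : V -> V -> Prop) (act : G -> V -> V).
Hypothesis hact : is_graph_action TG adj act.
Local Notation "x ** y" := (tmul TG x y) (at level 40, left associativity).
Local Notation inv := (tinv TG).
Local Notation one := (tone TG).

Lemma gact1 v : act one v = v. Proof. by case: hact. Qed.
Lemma gactM g h v : act (g ** h) v = act g (act h v). Proof. by case: hact => _ []. Qed.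
Lemma gadj_act g x y : adj x y <-> adj (act g x) (act g y). Proof. by case: hact => _ []. Qed.
Lemma gactK g v : act (inv g) (act g v) = v.
Proof. by rewrite -gactM tmulVg gact1. Qed.
Lemma gactKV g v : act g (act (inv g) v) = v.
Proof. by rewrite -gactM tmulgV gact1. Qed.
Lemma gact_inj g : injective (act g).
Proof. by move=> x y h; rewrite -(gactK g x) h gactK. Qed.
Lemma vstab_sub v : is_subgroup TG (vstab act v).
Proof.
split; first exact: gact1.
move=> x y; rewrite /vstab /= => hx hy; by rewrite gactM -{1}hy gactK.
Qed.

End Act.


Section Walk.
Variables (G : topologicalType) (TG : tgroup G) (V : Type)
  (adj : V -> V -> Prop) (act : G -> V -> V) (d : nat) (a : V) (e : 'I_d -> V).
Hypothesis hact : is_graph_action TG adj act.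
Hypothesis htrans : forall u v, exists g, act g u = v.
Hypothesis hconn : graph_connected adj.
Hypothesis hnb : nbhd_enum adj a e.
Local Notation "x ** y" := (tmul TG x y) (at level 40, left associativity).
Local Notation inv := (tinv TG).
Local Notation one := (tone TG).

Definition gv (v : V) : G := epsilon (inhabits one) (fun g => act g a = v).
Lemma gvP v : act (gv v) a = v.
Proof. exact: (epsilon_spec (inhabits one) (fun g => act g a = v) (htrans a v)). Qed.

Lemma nbrsP v u : adj v u <-> exists i, u = act (gv v) (e i).
Proof.
rewrite -{1}(gvP v) -{1}(gactKV hact (gv v) u) -(gadj_act hact).
rewrite (proj2 hnb); split=> [[i hi]|[i ->]]; exists i.
  by rewrite hi (gactKV hact).
by rewrite (gactK hact).
Qed.

Definition nbr (v : V) (r : nat) : V :=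
  match insub r with Some i => act (gv v) (e i) | None => v end.

Fixpoint wf (f n : nat) : V :=
  match f with 0 => a | f'.+1 =>
    match n with 0 => a | n'.+1 => nbr (wf f' (n' %/ d)) (n' %% d) end end.
Definition w n := wf n.+1 n.

Lemma wf_stable f f' n : (n < f)%N -> (n < f')%N -> wf f n = wf f' n.
Proof.
elim: f f' n => [|f IH] f' n //; case: f' => [|f'] //; case: n => [|n] //= h1 h2.
have hd : (n %/ d <= n)%N by apply: leq_div.
rewrite (IH f') //; apply: leq_ltn_trans hd _; by rewrite -ltnS.
Qed.

Lemma w0 : w 0 = a. Proof. by []. Qed.
Lemma wS n : w n.+1 = nbr (w (n %/ d)) (n %% d).
Proof.
rewrite /w; change (wf n.+2 n.+1) with (nbr (wf n.+1 (n %/ d)) (n %% d)).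
by rewrite (@wf_stable n.+1 (n %/ d).+1) // ltnS leq_div.
Qed.

Lemma wS_nb n : w n.+1 = w (n %/ d) \/ adj (w (n %/ d)) (w n.+1).
Proof.
rewrite wS /nbr; case: insubP => [i _ _|_]; last by left.
right; apply/nbrsP; by exists i.
Qed.

Lemma w_all u : exists n, w n = u.
Proof.
have := clos_rt_rtn1 _ _ _ _ (hconn a u).
elim=> [|y z ayz _ [n wn]]; first by exists 0%N.
move/nbrsP: ayz => [i ->].
have d0 : (0 < d)%N by case: i => /= k; apply: leq_ltn_trans; exact: leq0n.
exists (n * d + i).+1; rewrite wS divnMDl // modnMDl divn_small // modn_small //.
rewrite addn0 wn /nbr insubT //= => ip; congr (act _ (e _)); exact: val_inj.
Qed.
End Walk.


Section Fix.
Variables (G : topologicalType) (TG : tgroup G) (V : Type)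
  (adj : V -> V -> Prop) (act : G -> V -> V) (d : nat) (a : V) (e : 'I_d -> V).
Hypothesis hCA : cayley_abels TG adj act.
Hypothesis hnb : nbhd_enum adj a e.
Local Notation "x ** y" := (tmul TG x y) (at level 40, left associativity).
Local Notation inv := (tinv TG).
Local Notation one := (tone TG).

Let hact : is_graph_action TG adj act. Proof. by case: hCA => _ [_ [_ []]]. Qed.
Let htrans : forall u v, exists g, act g u = v. Proof. by case: hCA => _ [_ [_ [_ []]]]. Qed.
Let hstab : forall v, compact (vstab act v) /\ open (vstab act v).
Proof. by case: hCA => _ [_ [_ [_ []]]]. Qed.

Local Notation w := (w TG act a e).
Definition Nb v u := u = v \/ adj v u.
Definition Fix m : set G :=
  [set x | forall j, (j <= m)%N -> forall u, Nb (w j) u -> act x u = u].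

Lemma vstab_closed v : closed (vstab act v).
Proof. apply: open_sub_closed; [exact: (vstab_sub hact v) | exact: (proj2 (hstab v))]. Qed.

Lemma Fix_sub m : is_subgroup TG (Fix m).
Proof.
split; first by move=> j _ u _; exact: (gact1 hact u).
move=> x y hx hy j jm u hu.
rewrite (gactM hact). rewrite -{1}(hy j jm u hu). rewrite (gactK hact). exact: (hx j jm u hu).
Qed.

Lemma Fix_closed m : closed (Fix m).
Proof.
have -> : Fix m = \bigcap_(p in [set p : nat * V | (p.1 <= m)%N /\ Nb (w p.1) p.2])
   vstab act p.2.
  rewrite eqEsubset; split=> x.
    by move=> hx [j u] /= [jm hu]; exact: (hx j jm u hu).
  by move=> hx j jm u hu; exact: (hx (j, u)).
by apply: closed_bigI => p _; exact: vstab_closed.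
Qed.

Lemma Fix_decr m n : (m <= n)%N -> Fix n `<=` Fix m.
Proof. by move=> mn x hx j jm; apply: hx; exact: leq_trans jm mn. Qed.

Lemma Fix0E : Fix 0 = vstab act a `&` \bigcap_(i in [set: 'I_d]) vstab act (e i).
Proof.
rewrite eqEsubset; split=> x.
  move=> hx; split; first by apply: (hx 0%N) => //; left.
  move=> i _; apply: (hx 0%N) => //; right; apply/(proj2 hnb); by exists i.
move=> [ha he] j; rewrite leqn0 => /eqP -> u [->|/(proj2 hnb) [i <-]] //.
exact: he.
Qed.

Lemma Fix0_open : open (Fix 0).
Proof.
rewrite Fix0E; apply: openI; first exact: (proj2 (hstab a)).
apply: open_bigcap_fin => i; exact: (proj2 (hstab (e i))).
Qed.

Lemma Fix0_compact : compact (Fix 0).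
Proof.
apply: (@subclosed_compact _ (Fix 0) (vstab act a)); [exact: Fix_closed | exact: (proj1 (hstab a)) |].
by rewrite Fix0E => x [].
Qed.

Lemma Fix_norm m x y : Fix m x -> Fix m.+1 y -> Fix m.+1 (inv x ** y ** x).
Proof.
move=> hx hy j jm u hu.
rewrite !(gactM hact).
have [jlt|ej] : (j <= m)%N \/ j = m.+1.
  by rewrite leq_eqVlt in jm; case/orP: jm => [/eqP|]; auto.
  have hxu := hx j jlt u hu.
  rewrite hxu (hy j (leq_trans jlt (leqnSn m)) u hu).
  by rewrite -{1}hxu (gactK hact).
subst j.
have hv : act x (w m.+1) = w m.+1.
  case: (wS_nb hact htrans hnb m) => h.
    rewrite h; apply: (hx (m %/ d)); [exact: leq_div | by left].
  apply: (hx (m %/ d)); [exact: leq_div | by right].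
have hxu : Nb (w m.+1) (act x u).
  case: hu => [->|hu]; first by left.
  by right; rewrite -hv -(gadj_act hact).
by rewrite (hy m.+1 (leqnn _) _ hxu) (gactK hact).
Qed.

Lemma Fix_all x : (forall m, Fix m x) -> action_kernel act x.
Proof.
move=> hx u; have [n <-] := w_all hact htrans (proj1 (proj2 hCA)) hnb u.
by apply: (hx n n) => //; left.
Qed.

End Fix.


Section Core.
Variables (G : topologicalType) (TG : tgroup G) (V : Type)
  (adj : V -> V -> Prop) (act : G -> V -> V) (d : nat)
  (Q : topologicalType) (TQ : tgroup Q) (pi : G -> Q)
  (a : V) (e : 'I_d -> V) (L : {group {perm 'I_d}})
  (gT : finGroupType) (A : {group gT}).
Hypothesis hCA : cayley_abels TG adj act.
Hypothesis hQ : is_quotient_group TG (action_kernel act) TQ pi.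
Hypothesis hL : local_action adj act a e L.
Hypothesis hsA : simple A.

Local Notation "x ** y" := (tmul TG x y) (at level 40, left associativity).
Local Notation inv := (tinv TG).
Local Notation one := (tone TG).
Local Notation Fx := (Fix TG adj act a e).

Let hnb : nbhd_enum adj a e. Proof. by case: hL. Qed.
Let hact : is_graph_action TG adj act. Proof. by case: hCA => _ [_ [_ []]]. Qed.

Lemma piM x y : pi (x ** y) = tmul TQ (pi x) (pi y). Proof. by case: hQ. Qed.
Lemma pi1 : pi one = tone TQ.
Proof.
have h := piM one one; rewrite tmul1g in h.
by rewrite -{1}(tmulKg TQ (pi one) (pi one)) -h tmulVg.
Qed.
Lemma piV x : pi (inv x) = tinv TQ (pi x).
Proof. by apply: tinv_uniq; rewrite -piM tmulgV pi1. Qed.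
Lemma piK x : pi x = tone TQ <-> action_kernel act x.
Proof. by case: hQ => _ [_ [_ []]]. Qed.

Definition U := pi @` Fx 0.

Lemma U_sub : is_subgroup TQ U.
Proof.
split; first by exists one; [exact: sub1 (Fix_sub a e hCA 0)| exact: pi1].
move=> _ _ [x hx <-] [y hy <-]; exists (x ** inv y); last by rewrite piM piV.
exact: (proj2 (Fix_sub a e hCA 0)).
Qed.

Lemma U_co : compact_open_subgroup TQ U.
Proof.
split; last split.
- apply: continuous_compact; last exact: Fix0_compact hCA hnb.
  by apply: continuous_subspaceT; case: hQ => _ [_ []].
- by case: hQ => _ [_ [_ [ho _]]]; apply: ho; exact: Fix0_open hCA hnb.
- exact: U_sub.
Qed.

Lemma U_pre x : U (pi x) -> Fx 0 x.
Proof.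
move=> [y hy e1] j j0 u hu.
have hk : action_kernel act (x ** inv y).
  by apply/piK; rewrite piM piV -e1 tmulgV.
rewrite -{1}(gactK hact y u) -(gactM hact) hk.
exact: hy j j0 u hu.
Qed.

Section Series.
Variables (s : nat -> set Q) (n : nat) (f : Q -> gT).
Hypothesis hs0 : s 0%N = U.
Hypothesis hsS : forall k, closed (s k.+1) /\ normal_in TQ (s k.+1) (s k).
Hypothesis hfM : forall x y, s n x -> s n y -> f (tmul TQ x y) = (f x * f y)%g.
Hypothesis hfA : forall b, b \in A <-> exists2 x, s n x & f x = b.
Hypothesis hfK : forall x, s n x -> (f x = 1%g <-> s n.+1 x).

Lemma s_sub k : is_subgroup TQ (s k).
Proof. by case: k => [|k]; [rewrite hs0; exact: U_sub | case: (hsS k) => _ []]. Qed.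

Lemma s_U k : s k `<=` U.
Proof.
elim: k => [|k IH]; first by rewrite hs0.
by case: (hsS k) => _ [_ [h _]]; apply: subset_trans IH.
Qed.

Definition T := pi @^-1` s n.
Definition T' := pi @^-1` s n.+1.

Lemma T_sub : is_subgroup TG T.
Proof.
split; first by rewrite /T /= pi1; exact: sub1 (s_sub n).
by move=> x y hx hy; rewrite /T /= piM piV; exact: (proj2 (s_sub n)).
Qed.

Lemma T'_sub : is_subgroup TG T'.
Proof.
split; first by rewrite /T' /= pi1; exact: sub1 (s_sub n.+1).
by move=> x y hx hy; rewrite /T' /= piM piV; exact: (proj2 (s_sub n.+1)).
Qed.

Lemma T_Fix0 : T `<=` Fx 0.
Proof. by move=> x hx; apply: U_pre; apply: s_U hx. Qed.

Lemma T'T : T' `<=` T.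
Proof. by move=> x; case: (hsS n) => _ [_ [h _]]; apply: h. Qed.

Lemma T'_closed : closed T'.
Proof.
by move: (proj1 (hsS n)); case: hQ => _ [_ [hc _]]; move: hc => /continuous_closedP; apply.
Qed.

Lemma T_closed : closed T.
Proof.
rewrite /T; case: n hfM hfA hfK => [|k] _ _ _.
  have -> : pi @^-1` s 0%N = Fx 0.
    rewrite eqEsubset; split=> x; first by move=> hx; apply: U_pre; rewrite -hs0.
    by move=> hx; rewrite hs0; exists x.
  exact: (Fix_closed hCA (m:=0)).
by move: (proj1 (hsS k)); case: hQ => _ [_ [hc _]]; move: hc => /continuous_closedP; apply.
Qed.

Definition h x := f (pi x).

Lemma hM x y : T x -> T y -> h (x ** y) = (h x * h y)%g.
Proof. by move=> hx hy; rewrite /h piM hfM. Qed.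

Lemma h1 : h one = 1%g.
Proof.
have o : T one by exact: sub1 T_sub.
have := hM o o; rewrite tmul1g => e1.
by apply: (@mulIg _ (h one)); rewrite -e1 mul1g.
Qed.

Lemma hV x : T x -> h (inv x) = (h x)^-1%g.
Proof.
move=> hx; apply: (@mulgI _ (h x)); rewrite mulgV -hM ?tmulgV ?h1 //.
exact: subV T_sub hx.
Qed.

Lemma hA x : T x -> h x \in A.
Proof. by move=> hx; apply/hfA; exists (pi x). Qed.

Lemma hK x : T x -> (h x = 1%g <-> T' x).
Proof. by move=> hx; apply: hfK. Qed.

Lemma hsurj b : b \in A -> exists x, T x /\ h x = b.
Proof.
move/hfA => [q hq <-]; case: hQ => _ [hs _]; have [x hx] := hs q.
by exists x; rewrite /T /h /= hx.
Qed.
Definition xb b := epsilon (inhabits one) (fun x => T x /\ h x = b).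
Lemma xbP b : b \in A -> T (xb b) /\ h (xb b) = b.
Proof.
move=> hb; exact: (epsilon_spec (inhabits one) (fun x => T x /\ h x = b) (hsurj hb)).
Qed.

Definition C := T `&` ~` T'.

Lemma C_closed : closed C.
Proof.
have -> : C = \bigcup_(b in [set b : gT | b \in A /\ b <> 1%g])
    ((fun y => inv (xb b) ** y) @^-1` T').
  rewrite eqEsubset; split=> x.
    move=> [hx nx]; exists (h x); first split; [exact: hA | by move/(hK hx)|].
    have [hxb1 hxb2] := xbP (hA hx).
    rewrite /= /T'; apply/(hK _); first by apply: subM T_sub (subV T_sub hxb1) hx.
    by rewrite hM ?hV ?hxb2 ?mulVg //; exact: subV T_sub hxb1.
  move=> [b [bA b1] /= hy].
  have [hxb1 hxb2] := xbP bA.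
  have hyT := T'T hy.
  have hx : T x by rewrite -(tmulKVg TG (xb b) x); exact: subM T_sub hxb1 hyT.
  split=> // hx'; apply: b1.
  have := (proj2 (hK hx)) hx'; rewrite -(tmulKVg TG (xb b) x) hM // hxb2.
  by rewrite (proj2 (hK hyT) hy) mulg1.
apply: closed_bigcup; first exact: finite_finset.
move=> b _; apply: closed_translate; exact: T'_closed.
Qed.

Lemma exists_M : exists M, forall x, T x -> Fx M x -> T' x.
Proof.
apply: contrapT => hno.
have ne m : (C `&` Fx m) !=set0.
  apply: contrapT => hm; apply: hno; exists m => x hx hF.
  apply: contrapT => nT; apply: hm; exists x; split => //.
have Cc : compact C.
  apply: (subclosed_compact C_closed (Fix0_compact hCA hnb)).
  by move=> x [hx _]; exact: T_Fix0.
have [p [[Tp nT'p] hp]] := @compact_decr _ C (Fx) Cc (fun m => Fix_closed hCA (m:=m))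
  (fun m1 m2 h12 => Fix_decr h12) ne.
apply: nT'p; rewrite /T' /=.
have -> : pi p = tone TQ by apply/piK; move=> v; exact: (Fix_all hCA hnb hp v).
exact: sub1 (s_sub n.+1).
Qed.

Definition Im m := forall b, b \in A -> exists x, Fx m x /\ T x /\ h x = b.

Lemma Im0 : Im 0.
Proof. move=> b /hsurj [x [hx hb]]; exists x; split => //; exact: T_Fix0. Qed.

Lemma notImM : exists M, ~ Im M.
Proof.
have [M hM'] := exists_M; exists M => hI.
have [hA1 _] := simpleP _ hsA.
have [b bA b1] := trivgPn _ hA1.
have [x [hF [hx hb]]] := hI b bA.
move: b1; rewrite -hb (proj2 (hK hx) (hM' x hx hF)); by rewrite eqxx.
Qed.

Lemma nat_step (P : nat -> Prop) M : P 0%N -> ~ P M -> exists m, P m /\ ~ P m.+1.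
Proof.
move=> P0; elim: M => [|M IH] nPM; first by [].
case: (pselect (P M)) => hPM; first by exists M.
exact: IH.
Qed.

Lemma drop_lem m : Im m -> ~ Im m.+1 -> forall x, Fx m.+1 x -> T x -> h x = 1%g.
Proof.
move=> Imm nIm.
pose B := [set b : gT | `[< exists x, Fx m.+1 x /\ T x /\ h x = b >]]%SET.
have gB : group_set B.
  apply/group_setP; split.
    rewrite !inE; exists one; split; first exact: sub1 (Fix_sub a e hCA m.+1).
    by split; [exact: sub1 T_sub | exact: h1].
  move=> b1 b2; rewrite !inE => -[x1 [f1 [t1 <-]]] [x2 [f2 [t2 <-]]].
  exists (x1 ** x2); split; first exact: subM (Fix_sub a e hCA m.+1) f1 f2.
  by split; [exact: subM T_sub t1 t2 | exact: hM].
pose Bg := group gB.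
have BA : Bg \subset A.
  by apply/fintype.subsetP => b; rewrite !inE => -[x [_ [tx <-]]]; exact: hA.
have nB : normal Bg A.
  apply/andP; split => //; apply/normsP => b bA.
  have [y [fy [ty hy]]] := Imm b bA.
  apply/eqP; rewrite eqEcard cardJg leqnn andbT; apply/fintype.subsetP => c.
  rewrite mem_conjg !inE => -[x [fx [tx hx]]].
  rewrite -(conjgKV b c) -hx conjgE.
  exists (inv y ** x ** y); split; first by move=> j hj u hu; exact: (Fix_norm hCA hnb fy fx hj hu).
  have tyi := subV T_sub ty.
  split; first by apply: subM T_sub (subM T_sub tyi tx) ty.
  have t2 := subM T_sub tyi tx.
  by rewrite hM // hM // hV // hy mulgA.
have [_ hsimp] := simpleP _ hsA.
case: (hsimp Bg nB) => hB.
  move=> x fx tx.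
  have : h x \in Bg by rewrite !inE; exists x.
  by rewrite hB => /set1P.
exfalso; apply: nIm => b bA.
have : b \in Bg by rewrite hB.
by rewrite !inE.
Qed.

Lemma exists_drop : exists m, Im m /\ forall x, Fx m.+1 x -> T x -> h x = 1%g.
Proof.
have [M nM] := notImM.
have [m [Imm nIm]] := nat_step Im0 nM.
by exists m; split => //; exact: drop_lem.
Qed.

Section Perm.
Variable m : nat.
Hypothesis hIm : Im m.
Hypothesis hdrop : forall x, Fx m.+1 x -> T x -> h x = 1%g.

Let htrans : forall u v, exists g, act g u = v.
Proof. by case: hCA => _ [_ [_ [_ []]]]. Qed.
Let hsym : forall x y, adj x y -> adj y x.
Proof. by case: hCA => [[]]. Qed.

Local Notation w := (w TG act a e).
Let v := w m.+1.
Let j0 := (m %/ d)%N.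
Let j0m : (j0 <= m)%N. Proof. exact: leq_div. Qed.
Let g := gv TG act a v.
Let gP : act g a = v. Proof. exact: gvP. Qed.

Definition X x := Fx m x /\ T x.
Definition cj x := inv g ** x ** g.
Definition Rel x (p : {perm 'I_d}) := forall i, act (cj x) (e i) = e (p i).

Lemma X_sub : is_subgroup TG X.
Proof.
split; first by split; [exact: sub1 (Fix_sub a e hCA m) | exact: sub1 T_sub].
move=> x y [f1 t1] [f2 t2]; split; [exact: (proj2 (Fix_sub a e hCA m)) | exact: (proj2 T_sub)].
Qed.

Lemma adj_j0 : adj (w j0) v.
Proof.
case: (wS_nb hact htrans hnb m) => // heq.
exfalso.
have [hA1 _] := simpleP _ hsA.
have [b bA b1] := trivgPn _ hA1.
have [x [fx [tx hb]]] := hIm bA.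
move: b1; rewrite -hb (hdrop _ tx) ?eqxx //.
move=> j jm u hu.
have [jle|ej] : (j <= m)%N \/ j = m.+1.
  by rewrite leq_eqVlt in jm; case/orP: jm => [/eqP|]; auto.
  exact: fx j jle u hu.
subst j; rewrite heq in hu; exact: fx j0 j0m u hu.
Qed.

Lemma fixv x : X x -> act x v = v.
Proof. by move=> [fx _]; apply: (fx j0 j0m); right; exact: adj_j0. Qed.

Lemma fixj0 x : X x -> act x (w j0) = w j0.
Proof. by move=> [fx _]; apply: (fx j0 j0m); left. Qed.

Lemma cj_a x : X x -> act (cj x) a = a.
Proof.
by move=> hx; rewrite /cj !(gactM hact) gP fixv // -gP (gactK hact).
Qed.

Lemma cjM x y : cj (x ** y) = cj x ** cj y.
Proof.
by rewrite /cj -!(tmulA TG) (tmulA TG g) tmulgV tmul1g.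
Qed.

Lemma rel_act x p i : Rel x p -> act x (act g (e i)) = act g (e (p i)).
Proof.
move=> hr; rewrite -hr /cj !(gactM hact) (gactKV hact) //.
Qed.

Lemma rel_ex x : X x -> exists p, Rel x p.
Proof.
move=> hx.
have ex i : exists j, e j = act (cj x) (e i).
  apply/(proj2 hnb); rewrite -(cj_a hx) -(gadj_act hact); apply/(proj2 hnb).
  by exists i.
pose F i := epsilon (inhabits i) (fun j => e j = act (cj x) (e i)).
have hF i : e (F i) = act (cj x) (e i).
  exact: (epsilon_spec (inhabits i) (fun j => e j = act (cj x) (e i)) (ex i)).
have Finj : injective F.
  move=> i1 i2 h12; apply: (proj1 hnb); apply: (gact_inj hact (g := cj x)).
  by rewrite -!hF h12.
by exists (perm Finj) => i; rewrite permE hF.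
Qed.

Lemma rel_uniq x p p' : Rel x p -> Rel x p' -> p = p'.
Proof.
move=> h1 h2; apply/permP => i; apply: (proj1 hnb); by rewrite -h1 -h2.
Qed.

Lemma rel_mul x y p t : Rel x p -> Rel y t -> Rel (x ** y) (t * p)%g.
Proof.
move=> hs ht i; rewrite cjM (gactM hact) ht hs permM //.
Qed.

Lemma rel_one : Rel one 1%g.
Proof.
move=> i; rewrite perm1 /cj tmulg1 tmulVg; exact: (gact1 hact).
Qed.

Definition Hset := [set p : {perm 'I_d} | `[< exists x, X x /\ Rel x p >]]%SET.

Lemma Hgs : group_set Hset.
Proof.
apply/group_setP; split.
  by rewrite !inE; exists one; split; [exact: sub1 X_sub | exact: rel_one].
move=> s1 s2; rewrite !inE => -[x1 [X1 R1]] [x2 [X2 R2]].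
exists (x2 ** x1); split; [exact: subM X_sub X2 X1 | exact: rel_mul].
Qed.

Definition Hg := group Hgs.

Definition px p := epsilon (inhabits one) (fun x => X x /\ Rel x p).
Definition phi p := (h (px p))^-1%g.

Lemma phiE x p : X x -> Rel x p -> phi p = (h x)^-1%g.
Proof.
move=> hx hr.
have [hx' hr'] : X (px p) /\ Rel (px p) p.
  exact: (epsilon_spec (inhabits one) (fun x => X x /\ Rel x p) (ex_intro _ x (conj hx hr))).
set x' := px p in hx' hr' *.
pose z := inv x' ** x.
have Xz : X z by apply: subM X_sub (subV X_sub hx') hx.
have hz : h z = 1%g.
  apply: hdrop (proj2 Xz) => j jm u hu.
  have [jle|ej] : (j <= m)%N \/ j = m.+1.
    by rewrite leq_eqVlt in jm; case/orP: jm => [/eqP|]; auto.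
    exact: (proj1 Xz) j jle u hu.
  subst j; case: hu => [->|]; first exact: fixv.
  move/(nbrsP hact htrans hnb) => [i ->].
  rewrite /z (gactM hact) (rel_act i hr) -(rel_act i hr') (gactK hact) //.
have : h z = ((h x')^-1 * h x)%g by rewrite /z hM ?hV //; [case: hx'|exact: subV T_sub (proj2 hx')|case: hx].
rewrite hz => /esym /eqP; rewrite mulg_eq1 => /eqP e1.
by rewrite /phi -/x' e1.
Qed.

Lemma phiM : {in Hg &, {morph phi : s1 s2 / (s1 * s2)%g}}.
Proof.
move=> s1 s2; rewrite !inE => -[x1 [X1 R1]] [x2 [X2 R2]].
rewrite (phiE X1 R1) (phiE X2 R2) (phiE (subM X_sub X2 X1) (rel_mul R2 R1)).
by rewrite hM ?invMg //; [case: X2|case: X1].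
Qed.

Definition phim := Morphism phiM.

Lemma phim_im : (phim @* Hg)%g = A.
Proof.
rewrite morphimEdom; apply/setP => b; apply/imsetP/idP.
  move=> [p]; rewrite !inE => -[x [Xx Rx]] ->; rewrite /= (phiE Xx Rx) groupV.
  by apply: hA; case: Xx.
move=> bA; have [x [fx [tx hb]]] := hIm (groupVr bA).
have Xx : X x by [].
have [p Rs] := rel_ex Xx.
exists p; first by rewrite !inE; exists x.
by rewrite /= (phiE Xx Rs) hb invgK.
Qed.

Lemma core_perm : exists (i : 'I_d) (H : {group {perm 'I_d}}) (f : {morphism H >-> gT}),
  H \subset 'C_L[i | 'P]%g /\ (f @* H)%g = A.
Proof.
have [i0 hi0] : exists i, w j0 = act g (e i).
  by apply/(nbrsP hact htrans hnb); apply: hsym; exact: adj_j0.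
exists i0, Hg, phim; split; last exact: phim_im.
apply/fintype.subsetP => p; rewrite !inE => -[x [Xx Rx]].
apply/andP; split.
  apply/(proj2 hL); exists (cj x); split; [exact: cj_a | exact: Rx].
rewrite finset.sub1set !inE /=; apply/eqP; change (p i0 = i0); apply: (proj1 hnb).
rewrite -Rx /cj !(gactM hact) -hi0 fixj0 // hi0 (gactK hact) //.
Qed.

End Perm.

End Series.

End Core.

Section SubQ.
Local Open Scope group_scope.

Lemma lift_perm_onto n (i : 'I_n.+1) (s : {perm 'I_n.+1}) :
  s i = i -> exists t : {perm 'I_n}, lift_perm i i t = s.
Proof.
move=> si.
have hne k : s (lift i k) != i.
  apply/eqP=> h; have h2 : s (lift i k) = s i by rewrite si.
  by move: (neq_lift i k); rewrite (perm_inj h2) eqxx.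
pose tf k := odflt k (unlift i (s (lift i k))).
have htf k : lift i (tf k) = s (lift i k).
  by rewrite /tf; case: unliftP (hne k) => [j -> //|-> ]; rewrite eqxx.
have tinj : injective tf.
  move=> k1 k2 h; apply: (@lift_inj _ i); apply: (@perm_inj _ s); by rewrite -!htf h.
exists (perm tinj); apply/permP => x.
case: (unliftP i x) => [k ->|->]; last by rewrite lift_perm_id.
by rewrite lift_perm_lift permE htf.
Qed.

Lemma subq_lift n (i : 'I_n.+1) (H : {group {perm 'I_n.+1}}) (rT : finGroupType)
  (phi : {morphism H >-> rT}) (A : {group rT}) :
  (forall s, s \in H -> s i = i) -> phi @* H = A ->
  exists H' N' : {group {perm 'I_n}}, normal N' H' /\ H' / N' \isog A.
Proof.
move=> Hi phiA.
pose Hs := [set t : {perm 'I_n} | lift_perm i i t \in H]%SET.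
have gHs : group_set Hs.
  apply/group_setP; split; first by rewrite inE lift_perm1 group1.
  by move=> x y; rewrite !inE => hx hy; rewrite -(lift_permM i i i) groupM.
pose H' := group gHs.
pose psi t := phi (lift_perm i i t).
have psiM : {in H' &, {morph psi : x y / x * y}}.
  move=> x y; rewrite !inE => hx hy; by rewrite /psi -(lift_permM i i i) morphM.
pose psim := Morphism psiM.
have im : psim @* H' = A.
  rewrite -phiA morphimEdom morphimEdom; apply/setP => b; apply/imsetP/imsetP.
    by move=> [t ht ->]; exists (lift_perm i i t) => //; rewrite inE in ht.
  move=> [s hs ->]; have [t ht] := lift_perm_onto (Hi s hs).
  exists t; first by rewrite inE ht.
  by rewrite /= /psi ht.
exists H', [group of 'ker psim]; split; first exact: ker_normal.
by rewrite -im; exact: first_isog.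
Qed.

End SubQ.

Lemma subq_lift' d (i : 'I_d) (H : {group {perm 'I_d}}) (rT : finGroupType)
  (phi : {morphism H >-> rT}) (A : {group rT}) :
  (forall s, s \in H -> s i = i) -> (phi @* H)%g = A ->
  exists H' N' : {group {perm 'I_d.-1}}, normal N' H' /\ (H' / N')%g \isog A.
Proof. case: d i H phi => [|n] i; first by case: i. move=> H phi h1 h2; exact: (subq_lift h1 h2). Qed.

Theorem theorem5p5
  (G : topologicalType) (TG : tgroup G)
  (hG : tdlc G) (hcg : compactly_generated TG)
  (V : Type) (adj : V -> V -> Prop) (act : G -> V -> V) (d : nat)
  (hCA : cayley_abels TG adj act) (hdeg : regular_of_degree adj d)
  (Q : topologicalType) (TQ : tgroup Q) (pi : G -> Q)
  (hQ : is_quotient_group TG (action_kernel act) TQ pi)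
  (a : V) (e : 'I_d -> V) (L : {group {perm 'I_d}})
  (hL : local_action adj act a e L)
  (gT : finGroupType) (A : {group gT})
  (hA : local_simple_content TQ A) :
  (exists (i : 'I_d) (H N : {group {perm 'I_d}}),
      [/\ H \subset 'C_L[i | 'P]%g, normal N H & (H / N)%g \isog A]) /\
  (exists H N : {group {perm 'I_d.-1}}, normal N H /\ (H / N)%g \isog A).
Proof.
case: hA => hsA hall.
have [s [[hs0 [hsS _]] [n [_ [f [hfM [hfA hfK]]]]]]] :=
  hall _ (U_co hCA hQ hL).
have hsS' : forall k, closed (s k.+1) /\ normal_in TQ (s k.+1) (s k).
  by move=> k; case: (hsS k) => [h1 [h2 _]].
have [m [hIm hdrop]] := exists_drop hCA hQ hL hsA hs0 hsS' hfM hfA hfK.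
have [i0 [H [phi [hsub him]]]] :=
  core_perm hCA hQ hL hsA hs0 hsS' hfM hfA hIm hdrop.
split.
  exists i0, H, ('ker phi)%G; split; [exact: hsub | exact: ker_normal |].
  rewrite -him; exact: first_isog.
apply: (subq_lift' (i := i0) (phi := phi)) => // p hp.
have := fintype.subsetP hsub p hp; rewrite !inE => /andP [_].
by rewrite finset.sub1set !inE /= => /eqP.
Qed.
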